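(* Let $\mathcal{P}_1,\mathcal{P}_2$ be finite posets. If $\mathbf{T}\in\mathcal{N}_{<\infty}$ is a matrix of rank two, then $\mathbf{T}$ has ND rank two.
   Context: For a finite poset $\mathcal{Q}$, the order cone $\mathcal{C}(\mathcal{Q})$ is the set of $\mathbf{f}\in\mathbb{R}^{\mathcal{Q}}$ with $f_x\ge0$ for all $x$ and $f_x\le f_y$ whenever $x\preceq y$. $\mathcal{N}_{<\infty}$ is the set of matrices in $\mathbb{R}^{\mathcal{P}_1\times\mathcal{P}_2}$ of the form $\sum_{i=1}^r\mathbf{a}_i\mathbf{b}_i^\intercal$ for some finite $r$ with $\mathbf{a}_i\in\mathcal{C}(\mathcal{P}_1)$, $\mathbf{b}_i\in\mathcal{C}(\mathcal{P}_2)$; the ND rank is the minimal such $r$. Rank means ordinary real matrix rank. *)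

(* Defs.v *)
From HB Require Import structures.
From mathcomp Require Import all_boot all_order all_algebra.
From mathcomp Require Import reals.
Set Implicit Arguments. Unset Strict Implicit. Unset Printing Implicit Defensive.
Import Order.TTheory GRing.Theory Num.Theory.
Local Open Scope ring_scope.

Definition order_cone (R : realType) (d : Order.disp_t) (Q : finPOrderType d)
  (f : Q -> R) : Prop :=
  (forall x, 0 <= f x) /\ (forall x y : Q, (x <= y)%O -> f x <= f y).

Definition nd_decomp (R : realType) (d1 d2 : Order.disp_t)
  (P1 : finPOrderType d1) (P2 : finPOrderType d2) (T : P1 -> P2 -> R) (r : nat) : Prop :=
  exists (a : 'I_r -> P1 -> R) (b : 'I_r -> P2 -> R),
    (forall i, order_cone (a i)) /\ (forall i, order_cone (b i)) /\
    (forall x y, T x y = \sum_(i < r) a i x * b i y).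

Definition in_Nfin (R : realType) (d1 d2 : Order.disp_t)
  (P1 : finPOrderType d1) (P2 : finPOrderType d2) (T : P1 -> P2 -> R) : Prop :=
  exists r, nd_decomp T r.

Definition nd_rank_eq (R : realType) (d1 d2 : Order.disp_t)
  (P1 : finPOrderType d1) (P2 : finPOrderType d2) (T : P1 -> P2 -> R) (r : nat) : Prop :=
  nd_decomp T r /\ (forall r', nd_decomp T r' -> (r <= r')%N).

Definition mx_of (R : realType) (d1 d2 : Order.disp_t)
  (P1 : finPOrderType d1) (P2 : finPOrderType d2) (T : P1 -> P2 -> R)
  : 'M[R]_(#|P1|, #|P2|) :=
  \matrix_(i, j) T (enum_val i) (enum_val j).

(* Main.v *)
Require Import Defs.
From HB Require Import structures.
From mathcomp Require Import all_boot all_order all_algebra.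
From mathcomp Require Import reals.
From mathcomp Require Import ring lra.
Set Implicit Arguments. Unset Strict Implicit. Unset Printing Implicit Defensive.
Import Order.TTheory GRing.Theory Num.Theory.

Section Helpers.
Local Open Scope ring_scope.
Variable R : realType.

Lemma exists_max (I : finType) (P : pred I) (F : I -> R) i0 :
  P i0 -> exists i, P i /\ forall j, P j -> F j <= F i.
Proof.
move=> Pi0; case: (@arg_maxP _ R I i0 P F Pi0) => i Pi H; exists i; split=> //.
Qed.

Lemma sq2_neq0 (w0 w1 : R) : (w0 != 0) || (w1 != 0) -> w0 ^+ 2 + w1 ^+ 2 != 0.
Proof.
move=> h; rewrite paddr_eq0 ?sqr_ge0 // !sqrf_eq0; by case/orP: h => /negbTE ->; rewrite ?andbF.
Qed.

Lemma cone_ext (d : Order.disp_t) (Q : finPOrderType d) (f g : Q -> R) :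
  order_cone f -> (forall x, g x = f x) -> order_cone g.
Proof. by move=> [h1 h2] e; split=> [x|x y hxy]; rewrite !e ?h1 ?h2. Qed.

Variables (d1 d2 : Order.disp_t) (P1 : finPOrderType d1) (P2 : finPOrderType d2).

Lemma core (T : P1 -> P2 -> R) (a0 a1 : P1 -> R) (b0 b1 : P2 -> R) :
  (forall x y, T x y = a0 x * b0 y + a1 x * b1 y) ->
  (forall p q, (forall x, p * a0 x + q * a1 x = 0) -> p = 0 /\ q = 0) ->
  (forall y, order_cone (fun x => T x y)) ->
  (forall y y', (y <= y')%O -> order_cone (fun x => T x y' - T x y)) ->
  (forall w0 w1 : R, (w0 != 0) || (w1 != 0) -> ~ (forall y, w0 * b1 y - w1 * b0 y = 0)) ->
  nd_decomp T 2.
Proof.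
move=> HT Hinj Hcol Hdif Hrk.
pose I := (P2 + P2 * P2)%type.
pose vec (i : I) : R * R := match i with
  | inl y => (b0 y, b1 y)
  | inr (y, y') => if (y <= y')%O then (b0 y' - b0 y, b1 y' - b1 y) else (0, 0) end.
pose G i x := (vec i).1 * a0 x + (vec i).2 * a1 x.
have HG : forall i, order_cone (G i).
  case=> [y|[y y']] /=.
    by apply: cone_ext (Hcol y) _ => x; rewrite /G /= HT mulrC [a1 x * _]mulrC.
  rewrite /G /=; case: ifP => hyy.
    by apply: cone_ext (Hdif y y' hyy) _ => x; rewrite /= !HT; ring.
  by split=> [x|x x' _]; rewrite /= !mul0r addr0.
pose cross (c e : R * R) := c.1 * e.2 - c.2 * e.1.
pose nz i := ((vec i).1 != 0) || ((vec i).2 != 0).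
pose s0 := \sum_x a0 x. pose s1 := \sum_x a1 x.
pose sig (c : R * R) := c.1 * s0 + c.2 * s1.
have Hsig : forall i, nz i -> 0 < sig (vec i).
  move=> i hnz.
  have eS : sig (vec i) = \sum_x G i x.
    by rewrite /sig /s0 /s1 !mulr_sumr -big_split.
  have hge : forall x, 0 <= G i x by move=> x; case: (HG i) => ->.
  rewrite eS lt_def sumr_ge0 ?andbT //; apply/negP => /eqP h0.
  have h := psumr_eq0P (fun x _ => hge x) h0.
  have [p0 q0] := Hinj _ _ (fun x => h x isT).
  by move: hnz; rewrite /nz p0 q0 eqxx.
have [i0 nzi0] : exists i, nz i.
  case: (boolP [exists i, nz i]) => [/existsP//|]; rewrite negb_exists => /forallP hn.
  exfalso.
  apply: (Hrk 1 0); first by rewrite oner_eq0.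
  move=> y; have := hn (inl y); rewrite /nz /= negb_or !negbK => /andP[/eqP -> /eqP ->].
  by rewrite !mulr0 subr0.
have hs : s0 ^+ 2 + s1 ^+ 2 != 0.
  apply: sq2_neq0; rewrite -negb_and; apply/negP => /andP[/eqP e0 /eqP e1].
  by move: (Hsig _ nzi0); rewrite /sig e0 e1 !mulr0 addr0 ltxx.
pose phi (c : R * R) := s0 * c.2 - s1 * c.1.
pose slope i := phi (vec i) / sig (vec i).
have Hid : forall c e, 0 < sig c -> 0 < sig e ->
    cross c e = (phi e / sig e - phi c / sig c) * (sig c * sig e) / (s0 ^+ 2 + s1 ^+ 2).
  move=> c e hc he; move: hc he; rewrite /cross /phi /sig => hc he; field.
  by rewrite hs !gt_eqF.
have hN : 0 < s0 ^+ 2 + s1 ^+ 2 by rewrite lt_def hs addr_ge0 ?sqr_ge0.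
have [iu [nzu Hu]] := exists_max slope nzi0.
have [iv [nzv Hv]] := exists_max (fun i => - slope i) nzi0.
pose u := vec iu; pose v := vec iv.
have hsu := Hsig _ nzu; have hsv := Hsig _ nzv.
have Hz : forall i, ~~ nz i -> vec i = (0, 0).
  move=> i; rewrite /nz negb_or !negbK => /andP[/eqP e1 /eqP e2].
  by case: (vec i) e1 e2 => /= p q -> ->.
have Hcv : forall i, 0 <= cross v (vec i).
  move=> i; case: (boolP (nz i)) => hi; last by rewrite (Hz _ hi) /cross /= !mulr0 subrr.
  rewrite (Hid _ _ hsv (Hsig _ hi)); apply: divr_ge0 (ltW hN).
  apply: mulr_ge0; last exact: mulr_ge0 (ltW hsv) (ltW (Hsig _ hi)).
  by have := Hv i hi; rewrite lerN2 /slope => h; rewrite subr_ge0.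
have Hcu : forall i, 0 <= cross (vec i) u.
  move=> i; case: (boolP (nz i)) => hi; last by rewrite (Hz _ hi) /cross /= !mul0r subrr.
  rewrite (Hid _ _ (Hsig _ hi) hsu); apply: divr_ge0 (ltW hN).
  apply: mulr_ge0; last exact: mulr_ge0 (ltW (Hsig _ hi)) (ltW hsu).
  by have := Hu i hi; rewrite /slope => h; rewrite subr_ge0.
pose D := cross v u.
have hD0 : 0 <= D := Hcv iu.
have hD : D != 0.
  apply/eqP => hD.
  have e : slope iu = slope iv.
    have := Hid _ _ hsv hsu; rewrite -/D hD => /esym/eqP.
    rewrite !mulf_eq0 invr_eq0 (negbTE hs) (gt_eqF hsv) (gt_eqF hsu) !orbF subr_eq0.
    by move/eqP.
  apply: (Hrk u.1 u.2 nzu) => y.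
  change (cross u (vec (inl y)) = 0).
  case: (boolP (nz (inl y))) => hi; last by rewrite (Hz _ hi) /cross /= !mulr0 subrr.
  have h1 := Hv _ hi; have h2 := Hu _ hi.
  rewrite lerN2 in h1.
  have es : slope (inl y) = slope iu by apply: le_anti; rewrite h2 e h1.
  rewrite (Hid _ _ hsu (Hsig _ hi)).
  change ((slope (inl y) - slope iu) * (sig u * sig (vec (inl y))) / (s0 ^+ 2 + s1 ^+ 2) = 0).
  by rewrite es subrr !mul0r.
have hD0' : 0 < D by rewrite lt_def hD hD0.
pose U x := G iu x; pose V x := G iv x.
pose al y := cross v (vec (inl y)) / D.
pose be y := cross (vec (inl y)) u / D.
exists (fun i : 'I_2 => if val i == 0%N then U else V), (fun i : 'I_2 => if val i == 0%N then al else be).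
split; first by case=> [[|k] hk] /=; apply: HG.
split.
  case=> [[|k] hk] /=.
    split=> [y|y y' hyy]; first exact: divr_ge0 (Hcv _) hD0.
    rewrite -subr_ge0.
    have -> : al y' - al y = cross v (vec (inr (y, y'))) / D.
      rewrite /al /= hyy /cross /=; field; exact: hD.
    exact: divr_ge0 (Hcv _) hD0.
  split=> [y|y y' hyy]; first exact: divr_ge0 (Hcu _) hD0.
  rewrite -subr_ge0.
  have -> : be y' - be y = cross (vec (inr (y, y'))) u / D.
    rewrite /be /= hyy /cross /=; field; exact: hD.
  exact: divr_ge0 (Hcu _) hD0.
move=> x y; rewrite !big_ord_recl big_ord0 /=.
rewrite HT /U /V /G /al /be /D /cross /u /v /=.
move: hD; rewrite /D /cross /u /v.
move: (vec iu) (vec iv) => [u1 u2] [v1 v2] /= hD'; field; exact: hD'.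
Qed.

Lemma rank_le_decomp (T : P1 -> P2 -> R) r : nd_decomp T r -> (\rank (mx_of T) <= r)%N.
Proof.
move=> [a [b [_ [_ HT]]]].
pose A : 'M[R]_(#|P1|, r) := \matrix_(i, k) a k (enum_val i).
pose B : 'M[R]_(r, #|P2|) := \matrix_(k, j) b k (enum_val j).
have -> : mx_of T = A *m B.
  apply/matrixP => i j; rewrite !mxE HT; apply: eq_bigr => k _; by rewrite !mxE.
exact: leq_trans (mxrankM_maxl _ _) (rank_leq_col _).
Qed.

Lemma cones (T : P1 -> P2 -> R) : in_Nfin T ->
  (forall y, order_cone (fun x => T x y)) /\ (forall y y', (y <= y')%O -> order_cone (fun x => T x y' - T x y)).
Proof.
move=> [r [a [b [Ha [Hb HT]]]]]; split.
  move=> y; split=> [x|x x' hx]; rewrite !HT.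
    by apply: sumr_ge0 => i _; apply: mulr_ge0; [case: (Ha i) | case: (Hb i)].
  apply: ler_sum => i _; apply: ler_wpM2r; first by case: (Hb i).
  by case: (Ha i) => _; apply.
move=> y y' hy.
have E : forall x, T x y' - T x y = \sum_(i < r) a i x * (b i y' - b i y).
  by move=> x; rewrite !HT -sumrB; apply: eq_bigr => i _; rewrite mulrBr.
split=> [x|x x' hx]; rewrite !E.
  apply: sumr_ge0 => i _; apply: mulr_ge0; first by case: (Ha i).
  by rewrite subr_ge0; case: (Hb i) => _; apply.
apply: ler_sum => i _; apply: ler_wpM2r.
  by rewrite subr_ge0; case: (Hb i) => _; apply.
by case: (Ha i) => _; apply.
Qed.

Lemma factor (T : P1 -> P2 -> R) : \rank (mx_of T) = 2%N ->
  exists a0 a1 b0 b1,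
  (forall x y, T x y = a0 x * b0 y + a1 x * b1 y) /\ (forall p q, (forall x, p * a0 x + q * a1 x = 0) -> p = 0 /\ q = 0) /\ (forall w0 w1 : R, (w0 != 0) || (w1 != 0) -> ~ (forall y, w0 * b1 y - w1 * b0 y = 0)).
Proof.
move=> hr.
have hf := col_base_full (mx_of T); have hb := mulmx_base (mx_of T).
move: (col_base (mx_of T)) (row_base (mx_of T)) hf hb; rewrite hr => A B hf hb.
exists (fun x => A (enum_rank x) 0), (fun x => A (enum_rank x) 1).
exists (fun y => B 0 (enum_rank y)), (fun y => B 1 (enum_rank y)).
have HT : forall x y, T x y = A (enum_rank x) 0 * B 0 (enum_rank y) + A (enum_rank x) 1 * B 1 (enum_rank y).
  move=> x y; move/matrixP: (hb) => /(_ (enum_rank x) (enum_rank y)).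
  rewrite /= !mxE !enum_rankK => <-.
  have l1 : lift ord0 ord0 = 1 :> 'I_2 by apply: val_inj.
  by rewrite !big_ord_recl big_ord0 addr0 l1.
split=> //; split.
  move=> p q H.
  pose c : 'rV[R]_2 := \row_k (if val k == 0%N then p else q).
  have hfree : row_free A^T by rewrite /row_free mxrank_tr.
  have c0 : c *m A^T = 0.
    apply/matrixP => i j; rewrite !mxE !big_ord_recl big_ord0 !mxE /=.
    by have := H (enum_val j); rewrite enum_valK addr0 (_ : lift ord0 ord0 = 1 :> 'I_2) //; apply: val_inj.
  move/eqP: c0; rewrite mulmx_free_eq0 // => /eqP c0.
  move/matrixP: (c0) => hc; have := hc 0 0; have := hc 0 1.
  by rewrite !mxE /= => -> ->.
move=> w0 w1 hw H.
pose N := w0 ^+ 2 + w1 ^+ 2.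
have hN : N != 0 by exact: sq2_neq0.
pose g : 'M[R]_(#|P1|, 1) := \matrix_(i, k) (w0 * A i 0 + w1 * A i 1).
pose t : 'M[R]_(1, #|P2|) := \matrix_(k, j) ((w0 * B 0 j + w1 * B 1 j) / N).
have E : mx_of T = g *m t.
  apply/matrixP => i j; rewrite !mxE big_ord1 !mxE HT !enum_valK.
  have := H (enum_val j); rewrite enum_valK => Hj.
  set a0 := A i 0; set a1 := A i 1; set b0 := B 0 j; set b1 := B 1 j.
  rewrite -/b0 -/b1 in Hj.
  have -> : (w0 * a0 + w1 * a1) * ((w0 * b0 + w1 * b1) / N) =
            ((a0 * b0 + a1 * b1) * N + (w1 * a0 - w0 * a1) * (w0 * b1 - w1 * b0)) / N.
    by rewrite /N; field.
  by rewrite Hj mulr0 addr0 mulfK.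
have := rank_leq_col g; have := mxrankM_maxl g t; rewrite -E hr.
by move=> h1 h2; have := leq_trans h1 h2.
Qed.

End Helpers.

Unset Implicit Arguments.
Theorem theorem12 (R : realType) (d1 d2 : Order.disp_t)
  (P1 : finPOrderType d1) (P2 : finPOrderType d2) (T : P1 -> P2 -> R) :
  in_Nfin T -> \rank (mx_of T) = 2%N -> nd_rank_eq T 2.
Proof.
move=> hin hr; split; last by move=> r' /rank_le_decomp; rewrite hr.
have [Hc Hd] := cones hin.
have [a0 [a1 [b0 [b1 [HT [Hi Hr]]]]]] := factor hr.
exact: core HT Hi Hc Hd Hr.
Qed.
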